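(* Let $A=[a_{ij}]$ be the adjacency matrix of a strongly connected, aperiodic directed graph on $\mathcal X=\{1,\ldots,n\}$, and let $N\ge1$ be such that all entries of $A^N$ are positive. Let $\lambda_A$, $u,v>0$ with $A^Tu=\lambda_Au$, $Av=\lambda_Av$, $\sum_iu_iv_i=1$, $\nu_{RB}(i)=u_iv_i$, $r_{ij}=\frac{v_j}{\lambda_Av_i}a_{ij}$, and $\mathfrak M_{\rm RB}(x_0,\ldots,x_N)=\nu_{RB}(x_0)r_{x_0x_1}\cdots r_{x_{N-1}x_N}$. Let $\mu_0$ be a measure on $\mathcal X$ with $\mu_0(x)>0$ for all $x$ and $\mathfrak M(x_0,\ldots,x_N)=\mu_0(x_0)a_{x_0x_1}\cdots a_{x_{N-1}x_N}$. Let $\mathcal P(\delta_1,\delta_n)$ be the set of probability distributions on $\mathcal X^{N+1}$ with marginal at time $0$ equal to the point mass $\delta_1$ at node $1$ and marginal at time $N$ equal to the point mass $\delta_n$ at node $n$. Then the minimizer $\mathfrak M^*[\delta_1,\delta_n]$ of $\mathbb D(P\|\mathfrak M_{\rm RB})$ over $P\in\mathcal P(\delta_1,\delta_n)$ also solves the problem $\min\{\mathbb D(P\|\mathfrak M)\mid P\in\mathcal P(\delta_1,\delta_n)\}$.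
   Context: Relative entropy of a probability distribution $P$ with respect to a nonnegative measure $Q$ on a finite set: $\mathbb D(P\|Q)=\sum_x P(x)\log\frac{P(x)}{Q(x)}$ if $\mathrm{supp}(P)\subseteq\mathrm{supp}(Q)$ (with $0\log0=0$), and $+\infty$ otherwise. *)

(* Defs.v *)
From HB Require Import structures.
From mathcomp Require Import all_boot all_order all_algebra.
From mathcomp Require Import reals ereal exp.
Set Implicit Arguments. Unset Strict Implicit. Unset Printing Implicit Defensive.
Import Order.TTheory GRing.Theory Num.Theory.
Local Open Scope ring_scope.

Section Defs.
Variable R : realType.

Definition mxpow (n : nat) (A : 'M[R]_n) (k : nat) : 'M[R]_n :=
  iter k (fun B => B *m A) 1%:M.

Definition is_adjacency (n : nat) (A : 'M[R]_n) : Prop :=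
  forall i j, A i j = 0 \/ A i j = 1.

Definition strongly_connected (n : nat) (A : 'M[R]_n) : Prop :=
  forall i j, exists k, (0 < k)%N /\ 0 < mxpow A k i j.

Definition aperiodic (n : nat) (A : 'M[R]_n) : Prop :=
  forall d : nat,
    (forall (i : 'I_n) (k : nat), (0 < k)%N -> 0 < mxpow A k i i -> (d %| k)%N) ->
    d = 1%N.

Definition path_t (n N : nat) := {ffun 'I_N.+1 -> 'I_n}.

(* previous / next time index for step k : 'I_N, i.e. times k and k+1 *)
Definition tprev (N : nat) (k : 'I_N) : 'I_N.+1 := widen_ord (leqnSn N) k.
Definition tnext (N : nat) (k : 'I_N) : 'I_N.+1 := lift ord0 k.

Definition path_measure (n N : nat) (mu0 : 'I_n -> R) (t : 'I_n -> 'I_n -> R)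
  (x : path_t n N) : R :=
  mu0 (x ord0) * \prod_(k < N) t (x (tprev k)) (x (tnext k)).

Definition bridge_set (n N : nat) (a b : 'I_n)
  (P : {ffun path_t n N -> R}) : Prop :=
  [/\ forall x, 0 <= P x,
      \sum_x P x = 1,
      forall i : 'I_n, \sum_(x : path_t n N | x ord0 == i) P x = (i == a)%:R &
      forall i : 'I_n, \sum_(x : path_t n N | x ord_max == i) P x = (i == b)%:R].

Definition relent (T : finType) (P Q : T -> R) : \bar R :=
  if [forall x, (P x != 0) ==> (Q x != 0)]
  then (\sum_x (if P x == 0 then 0 else P x * ln (P x / Q x)))%:E
  else +oo%E.

End Defs.

(* Main.v *)
Require Import Defs.
From HB Require Import structures.
From mathcomp Require Import all_boot all_order all_algebra.
From mathcomp Require Import reals ereal exp.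
From mathcomp Require Import ring.
Import Order.TTheory GRing.Theory Num.Theory.
Local Open Scope ring_scope.

Lemma relent_scale (R : realType) (T : finType) (P Q1 Q2 : T -> R) (c : R) :
  0 < c -> (forall x, 0 <= P x) -> \sum_x P x = 1 ->
  (forall x, 0 <= Q1 x) ->
  (forall x, P x != 0 -> Q1 x = c * Q2 x) ->
  relent P Q2 = (relent P Q1 + (ln c)%:E)%E.
Proof.
move=> c0 P0 P1 Q10 HQ.
have Hsupp : [forall x, (P x != 0) ==> (Q1 x != 0)] =
             [forall x, (P x != 0) ==> (Q2 x != 0)].
  apply: eq_forallb => x; case: (boolP (P x != 0)) => //= Px.
  by rewrite (HQ x Px) mulf_eq0 negb_or gt_eqF.
rewrite /relent -Hsupp; case: ifP => // /forallP Hs.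
rewrite -EFinD; congr (_%:E).
have -> : ln c = \sum_x (if P x == 0 then 0 else P x * ln c).
  rewrite -[LHS]mul1r -P1 mulr_suml; apply: eq_bigr => x _.
  by case: eqP => // ->; rewrite mul0r.
rewrite -big_split /=; apply: eq_bigr => x _.
case: eqP => [_|/eqP Px]; first by rewrite addr0.
have Q1x : Q1 x != 0 by move: (Hs x); rewrite Px.
have Pp : 0 < P x by rewrite lt0r Px P0.
have Q1p : 0 < Q1 x by rewrite lt0r Q1x Q10.
have Q2x : Q2 x = Q1 x / c by rewrite HQ // [c * _]mulrC mulfK ?gt_eqF.
rewrite Q2x invf_div mulrA -mulrDr -lnM ?posrE ?divr_gt0 //.
by rewrite mulrAC.
Qed.
Lemma telesc (R : fieldType) (g : nat -> R) (N : nat) :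
  (forall i, g i != 0) -> \prod_(k < N) (g k.+1 / g k) = g N / g 0%N.
Proof.
move=> gn; elim: N => [|N IH]; first by rewrite big_ord0 divff.
rewrite big_ord_recr /= IH; field; by rewrite !gn.
Qed.

Lemma bridge_supp (R : realType) n N (a b : 'I_n) (P : {ffun path_t n N -> R}) x :
  bridge_set a b P -> P x != 0 -> x ord0 = a /\ x ord_max = b.
Proof.
case=> P0 _ H0 HN Px; split.
  apply/eqP; apply/negPn/negP => ne.
  have := H0 (x ord0); rewrite (negbTE ne) => /(psumr_eq0P (fun y _ => P0 y)) H.
  by rewrite H ?eqxx in Px.
apply/eqP; apply/negPn/negP => ne.
have := HN (x ord_max); rewrite (negbTE ne) => /(psumr_eq0P (fun y _ => P0 y)) H.
by rewrite H ?eqxx in Px.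
Qed.

Lemma path_tel (R : realType) n N (v : 'I_n -> R) (x : path_t n N) :
  (forall i, v i != 0) ->
  \prod_(k < N) (v (x (tnext k)) / v (x (tprev k))) = v (x ord_max) / v (x ord0).
Proof.
move=> vn.
pose g := fun i : nat => v (x (inord i)).
have -> : \prod_(k < N) (v (x (tnext k)) / v (x (tprev k))) = \prod_(k < N) (g k.+1 / g k).
  apply: eq_bigr => k _; rewrite /g; congr (v (x _) / v (x _)); apply/val_inj.
    by rewrite /= inordK // ltnS.
  by rewrite /= inordK // ltnS ltnW.
rewrite telesc; last by move=> i; exact: vn.
rewrite /g; congr (v (x _) / v (x _)); apply/val_inj; by rewrite /= inordK.
Qed.

Theorem proposition5p2 (R : realType) (n : nat) (A : 'M[R]_n)
  (HA : is_adjacency A) (Hsc : strongly_connected A) (Hap : aperiodic A)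
  (N : nat) (HN : (1 <= N)%N) (HAN : forall i j, 0 < mxpow A N i j)
  (lam : R) (u v : 'I_n -> R)
  (Hu : forall i, 0 < u i) (Hv : forall i, 0 < v i)
  (HuA : forall j, \sum_i A i j * u i = lam * u j)
  (HvA : forall i, \sum_j A i j * v j = lam * v i)
  (Huv : \sum_i u i * v i = 1)
  (mu0 : 'I_n -> R) (Hmu0 : forall x, 0 < mu0 x)
  (x1 xn : 'I_n) (Hx1 : val x1 = 0%N) (Hxn : val xn = n.-1)
  (Pstar : {ffun path_t n N -> R}) :
  let nuRB := fun i => u i * v i in
  let r := fun i j => v j / (lam * v i) * A i j in
  let MRB := path_measure nuRB r in
  let M := path_measure mu0 (fun i j => A i j) in
  bridge_set x1 xn Pstar ->
  (forall P, bridge_set x1 xn P -> (relent Pstar MRB <= relent P MRB)%E) ->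
  forall P, bridge_set x1 xn P -> (relent Pstar M <= relent P M)%E.
Proof.
move=> nuRB r MRB M Hstar Hmin P HP.
have A0 : forall i j, 0 <= A i j by move=> i j; case: (HA i j) => ->.
have lam0 : 0 < lam.
  have [i Aij] : exists i, A i x1 != 0.
    case: (boolP [exists i, A i x1 != 0]) => [/existsP //|].
    rewrite negb_exists => /forallP H0.
    have : mxpow A N x1 x1 = 0.
      rewrite /mxpow -(prednK HN) /= mxE big1 // => k _.
      by rewrite (eqP (negbNE (H0 k))) mulr0.
    by move=> E; have := HAN x1 x1; rewrite E ltxx.
  have Ap : 0 < A i x1 * u i by rewrite mulr_gt0 // lt0r Aij A0.
  have : 0 < lam * u x1.
    rewrite -HuA (bigD1 i) //=; apply: (lt_le_trans Ap).
    by rewrite lerDl sumr_ge0 // => k _; rewrite mulr_ge0 // ltW.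
  by rewrite pmulr_lgt0.
set c := u x1 * v xn / lam ^+ N / mu0 x1.
have c0 : 0 < c by rewrite /c !divr_gt0 ?mulr_gt0 ?exprn_gt0.
have vn : forall i, v i != 0 by move=> i; rewrite gt_eqF.
have MRB0 : forall x, 0 <= MRB x.
  move=> x; rewrite /MRB /path_measure /nuRB; apply: mulr_ge0; first by rewrite mulr_ge0 ?ltW.
  apply: prodr_ge0 => k _; rewrite /r mulr_ge0 // divr_ge0 ?mulr_ge0 ?ltW //.
have HS : forall Q : {ffun path_t n N -> R}, bridge_set x1 xn Q -> forall x, Q x != 0 -> MRB x = c * M x.
  move=> Q HQ x Qx; have [e0 eN] := @bridge_supp R n N x1 xn Q x HQ Qx.
  rewrite /MRB /M /path_measure /nuRB.
  have E : lam^-1 ^+ N = \prod_(k < N) lam^-1 by rewrite prodr_const card_ord.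
  have -> : \prod_(k < N) r (x (tprev k)) (x (tnext k)) =
     \prod_(k < N) (v (x (tnext k)) / v (x (tprev k))) *
       (lam^-1 ^+ N * \prod_(k < N) A (x (tprev k)) (x (tnext k))).
    rewrite E -!big_split; apply: eq_bigr => k _; rewrite /r.
    rewrite /=; field; by rewrite vn gt_eqF.
  rewrite path_tel // e0 eN /c exprVn.
  field; by rewrite vn !gt_eqF ?exprn_gt0.
have [P0 P1 _ _] := HP; have [S0 S1 _ _] := Hstar.
rewrite (@relent_scale _ _ P MRB M c c0 P0 P1 MRB0 (HS _ HP)).
rewrite (@relent_scale _ _ Pstar MRB M c c0 S0 S1 MRB0 (HS _ Hstar)).
by apply: leeD2r; apply: Hmin.
Qed.
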